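(* Let $m\ge 2$ and let $H_1,\dots,H_k$ be complete graphs, each with at least two vertices. Then for every $n$, $\mathrm{ex}^{\mathrm{col}}(n,(H_1,\dots,H_k),K_m)=\max_{i\le k}\mathcal N(H_i,T_{m-1}(n))$; that is, the maximum of $\sum_{i=1}^k\mathcal N(H_i,G_i)$ over edge-colored $K_m$-free $n$-vertex graphs $G$ is attained by the Tur\'an graph $T_{m-1}(n)$ with all edges of a single color.
   Context: $T_{m-1}(n)$ is the complete $(m-1)$-partite graph on $n$ vertices with parts of size $\lfloor n/(m-1)\rfloor$ or $\lceil n/(m-1)\rceil$. $\mathcal N(H,G)$ is the number of subgraphs of $G$ isomorphic to $H$. For a graph $G$ whose edges are colored with colors $1,\dots,k$, $G_i$ is the subgraph of edges of color $i$; $\mathrm{ex}^{\mathrm{col}}(n,(H_1,\dots,H_k),F)$ is the maximum of $\sum_i\mathcal N(H_i,G_i)$ over all $F$-free $n$-vertex graphs $G$ and all such colorings. *)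

(* Defs.v *)
From mathcomp Require Import all_boot.
Set Implicit Arguments. Unset Strict Implicit. Unset Printing Implicit Defensive.

(* An edge-coloured simple graph on vertex set 'I_n with colours 'I_k:
   c (x,y) = Some i  iff xy is an edge of colour i; None iff not an edge. *)
Definition colgraph (n k : nat) := {ffun 'I_n * 'I_n -> option 'I_k}.

Definition valid_colgraph n k (c : colgraph n k) : bool :=
  [forall x, c (x, x) == None] && [forall x, forall y, c (x, y) == c (y, x)].

Definition cg_adj n k (c : colgraph n k) : rel 'I_n := fun x y => c (x, y) != None.
Definition cg_col n k (c : colgraph n k) (i : 'I_k) : rel 'I_n :=
  fun x y => c (x, y) == Some i.

Definition is_clique n (r : rel 'I_n) (S : {set 'I_n}) : bool :=
  [forall x in S, forall y in S, (x != y) ==> r x y].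

Definition numK n (a : nat) (r : rel 'I_n) : nat :=
  #|[set S : {set 'I_n} | (#|S| == a) && is_clique r S]|.

Definition Kfree n (m : nat) (r : rel 'I_n) : bool :=
  [forall S : {set 'I_n}, (#|S| == m) ==> ~~ is_clique r S].

Definition ex_col (n k : nat) (a : 'I_k -> nat) (m : nat) : nat :=
  \max_(c : colgraph n k | valid_colgraph c && Kfree m (cg_adj c))
     \sum_(i < k) numK (a i) (cg_col c i).

(* Turan graph T_{m-1}(n): parts are residue classes mod (m-1), hence of
   sizes floor(n/(m-1)) or ceil(n/(m-1)) *)
Definition turan (m n : nat) : rel 'I_n :=
  fun x y => (x %% (m - 1)) != (y %% (m - 1)).
Arguments turan m n : clear implicits.
Arguments ex_col n k a m : clear implicits.

(* Main.v *)
Require Import Defs.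
From mathcomp Require Import all_boot zify.
From Stdlib Require Import Classical.
Set Implicit Arguments. Unset Strict Implicit. Unset Printing Implicit Defensive.


Fixpoint esl (l : seq nat) (s : nat) : nat :=
  match l with
  | [::] => (s == 0)
  | x :: l' => esl l' s + (if s is s'.+1 then x * esl l' s' else 0)
  end.

Lemma esl0 l : esl l 0 = 1.
Proof. by elim: l => //= x l ->. Qed.

Lemma esl_cons_ext x l1 l2 : esl l1 =1 esl l2 -> esl (x :: l1) =1 esl (x :: l2).
Proof. by move=> h [|s] /=; rewrite !h. Qed.

Lemma esl_swap x y l : esl (x :: y :: l) =1 esl (y :: x :: l).
Proof. move=> [|[|s]] /=; lia. Qed.

Lemma esl_mid p1 x p2 : esl (p1 ++ x :: p2) =1 esl (x :: p1 ++ p2).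
Proof.
elim: p1 => [|z p1 IH] //= s.
rewrite -/(esl (z :: (p1 ++ x :: p2)) s).
rewrite (esl_cons_ext z IH) esl_swap //.
Qed.

Lemma esl_perm l1 l2 : perm_eq l1 l2 -> esl l1 =1 esl l2.
Proof.
elim: l1 l2 => [|x l1 IH] l2 hp.
  by move/perm_size: hp; case: l2.
have xin : x \in l2 by rewrite -(perm_mem hp) mem_head.
case/splitPr: xin hp => p1 p2 hp s.
rewrite esl_mid.
apply: esl_cons_ext; apply: IH.
rewrite -(perm_cons x); apply: (perm_trans hp).
by rewrite -cat1s perm_catCA.
Qed.

Lemma esl_zero l : esl (0 :: l) =1 esl l.
Proof. by move=> [|s] /=; rewrite ?mul0n addn0. Qed.

Lemma esl_filter0 l : esl [seq x <- l | x != 0] =1 esl l.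
Proof.
elim: l => [|x l IH] //= s.
case: eqP => [->|_]; first by rewrite -/(esl (0 :: l) s) esl_zero.
exact: (esl_cons_ext x IH).
Qed.

Lemma esl_nseq0 l k : esl (l ++ nseq k 0) =1 esl l.
Proof.
elim: l => [|x l IH] /=.
  by elim: k => [|k IHk] //= s; rewrite -/(esl (0 :: nseq k 0) s) esl_zero.
exact: (esl_cons_ext x IH).
Qed.

Lemma esl_super l p q : esl l (p + q) <= esl l p * esl l q.
Proof.
elim: l p q => [|x l IH] p q /=.
  by case: p; case: q.
case: p => [|p]; first by rewrite esl0 !add0n mul1n; case: q.
rewrite addSn.
case: q => [|q].
  by rewrite addn0 esl0 muln1.
have h1 := IH p.+1 q.+1. have h2 := IH p q.+1. have h3 := IH p.+1 q. have h4 := IH p q.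
rewrite !addSn !addnS /= in h1 h2 h3 h4 *.
idtac.
nia.
Qed.


Definition canon r n := nseq (r - n %% r) (n %/ r) ++ nseq (n %% r) (n %/ r).+1.
Definition sumsq (l : seq nat) := sumn (map (fun x => x * x) l).

Lemma filter_nseq_pred1 v (l : seq nat) :
  filter (pred1 v) l = nseq (count (pred1 v) l) v.
Proof.
rewrite -size_filter; apply/all_pred1P.
by apply/allP => z; rewrite mem_filter => /andP[].
Qed.

Lemma balanced_eq l r n : 0 < r -> size l = r -> sumn l = n ->
  (forall x y, x \in l -> y \in l -> x <= y.+1) -> esl l =1 esl (canon r n).
Proof.
move=> r0 hs hn hb.
have ex : exists k, k \in l.
  by case: l hs r0 hb hn => [|z l] /=; [move=><-|exists z; rewrite mem_head].
case: (ex_minnP ex) => q qin qmin.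
have hq : forall z, z \in l -> (z == q) || (z == q.+1).
  move=> z zin; have := qmin _ zin; have := hb _ _ zin qin; lia.
have hp : perm_eq l (nseq (count (pred1 q) l) q ++ nseq (count (pred1 q.+1) l) q.+1).
  rewrite -!filter_nseq_pred1 perm_sym.
  have -> : filter (pred1 q.+1) l = filter (predC (pred1 q)) l.
    apply: eq_in_filter => z zin /=; have := hq z zin; lia.
  by rewrite perm_filterC.
set B := count (pred1 q) l in hp; set A := count (pred1 q.+1) l in hp.
have hsz : B + A = r by rewrite -hs (perm_size hp) size_cat !size_nseq.
have hsum : n = B * q + A * q.+1.
  by rewrite -hn (perm_sumn hp) sumn_cat !sumn_nseq mulnC (mulnC A).
move=> s; rewrite (esl_perm hp s) /canon.
have [Alt|Ar] := ltnP A r.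
  have h1 : n %/ r = q.
    rewrite hsum -hsz; apply/eqP; rewrite eqn_leq; apply/andP; split.
      rewrite -ltnS ltn_divLR; [lia|lia].
    rewrite leq_divRL; lia.
  have h2 : n %% r = A.
    by move: (divn_eq n r); rewrite h1; lia.
  by rewrite h1 h2 -hsz addnK.
have AE : A = r by move: (count_size (pred1 q.+1) l); rewrite hs -/A; lia.
have BE : B = 0 by lia.
have h1 : n %/ r = q.+1 by rewrite hsum BE AE mul0n add0n mulKn.
have h2 : n %% r = 0 by rewrite hsum BE AE mul0n add0n modnMr.
by rewrite h1 h2 BE AE subn0 cats0.
Qed.

Lemma esl_two x y l s :
  esl (x :: y :: l) s.+2 = esl l s.+2 + (x + y) * esl l s.+1 + x * y * esl l s.
Proof. rewrite /=; lia. Qed.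

Lemma P2 r n a : 0 < r -> 2 <= a -> forall l, size l = r -> sumn l = n ->
  esl l 2 <= esl (canon r n) 2 /\
  esl l a * esl (canon r n) 2 <= esl l 2 * esl (canon r n) a.
Proof.
move=> r0 a2 l; case: a a2 => [|[|a']] // _.
set E := esl (canon r n) 2; set N := esl (canon r n) a'.+2.
suff H : forall M l, sumsq l < M -> size l = r -> sumn l = n ->
  esl l 2 <= E /\ esl l a'.+2 * E <= esl l 2 * N by apply: H; apply: ltnSn.
elim=> // M IH {}l hM hs hn.
case: (classic (exists x y, x \in l /\ y \in l /\ y.+2 <= x)); last first.
  move=> nb.
  have hb : forall x y, x \in l -> y \in l -> x <= y.+1.
    move=> x y xl yl; case: (leqP x y.+1) => // h; exfalso; apply: nb.
    by exists x, y.
  have := balanced_eq r0 hs hn hb; rewrite /E /N => e.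
  by rewrite !e /E /N mulnC; split.
case=> x [y [xl [yl hxy]]].
have yr : y \in rem x l.
  rewrite -has_pred1 has_count count_mem_rem.
  have : 0 < count (pred1 y) l by rewrite -has_count has_pred1.
  have : (x == y) = false by apply/eqP; lia.
  move=> -> /=; lia.
set rest := rem y (rem x l).
have hp : perm_eq l [:: x, y & rest].
  apply: (perm_trans (perm_to_rem xl)); rewrite perm_cons.
  exact: perm_to_rem.
have hs' : size [:: x.-1, y.+1 & rest] = r by rewrite -hs (perm_size hp).
have hn' : sumn [:: x.-1, y.+1 & rest] = n.
  rewrite -hn (perm_sumn hp) /=; lia.
have hM' : sumsq [:: x.-1, y.+1 & rest] < M.
  move: hM; rewrite /sumsq (perm_sumn (perm_map _ hp)) /=.
  have : (x.-1 * x.-1 + y.+1 * y.+1) < x * x + y * y by nia.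
  lia.
have [i1 i2] := IH _ hM' hs' hn'.
rewrite !(esl_perm hp).
move: i1 i2.
rewrite !esl_two !esl0.
have s1 := esl_super rest 2 a'. have s2 := esl_super rest 1 a'.
rewrite add2n in s1; rewrite add1n in s2.
set R2 := esl rest 2 in s1 *; set R1 := esl rest 1 in s2 *.
set Ra := esl rest a'.+2 in s1 *; set Rb := esl rest a'.+1 in s2 *.
set Rc := esl rest a' in s1 s2 *.
have [d hd] : exists d, x = y + 2 + d by exists (x - (y + 2)); lia.
rewrite hd.
have -> : (y + 2 + d).-1 = y + 1 + d by lia.
set e2 := R2 + (y + 2 + d + y) * R1 + (y + 2 + d) * y * 1.
set ea := Ra + (y + 2 + d + y) * Rb + (y + 2 + d) * y * Rc.
have E2 : R2 + (y + 1 + d + y.+1) * R1 + (y + 1 + d) * y.+1 * 1 = e2 + d.+1.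
  rewrite /e2; nia.
have EA : Ra + (y + 1 + d + y.+1) * Rb + (y + 1 + d) * y.+1 * Rc = ea + d.+1 * Rc.
  rewrite /ea; nia.
rewrite E2 EA => i1 i2.
have key : ea <= e2 * Rc by rewrite /ea /e2; nia.
split; first by lia.
have pos : 0 < e2 + d.+1 by lia.
rewrite -(leq_pmul2r pos).
apply: (@leq_trans (e2 * (ea + d.+1 * Rc) * E)).
  rewrite -mulnA (mulnC E) mulnA leq_mul2r; apply/orP; right.
  nia.
move: (leq_mul (leqnn e2) i2); rewrite !mulnA.
by rewrite -(mulnA e2 N) (mulnC N) mulnA.
Qed.


Section W.
Variable n : nat.
Implicit Types (r : rel 'I_n) (w : 'I_n -> nat) (S : {set 'I_n}).

Lemma cliqueP r S :
  reflect (forall x y, x \in S -> y \in S -> x != y -> r x y) (is_clique r S).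
Proof.
apply: (iffP forallP) => [h x y xS yS nxy | h x].
  by move: (h x); rewrite xS /= => /forallP /(_ y); rewrite yS nxy.
by apply/implyP => xS; apply/forallP => y; apply/implyP => yS; apply/implyP; apply: h.
Qed.

Definition Pw r s w : nat :=
  \sum_(S : {set 'I_n} | (#|S| == s) && is_clique r S) \prod_(x in S) w x.

Lemma Pw_ext r s w1 w2 : w1 =1 w2 -> Pw r s w1 = Pw r s w2.
Proof. by move=> h; apply: eq_bigr => S _; apply: eq_bigr => x _. Qed.

Lemma numK_Pw r s : numK s r = Pw r s (fun _ => 1).
Proof.
rewrite /numK /Pw -sum1_card.
by apply: eq_big => [S|S _]; rewrite ?inE // prod_nat_const exp1n.
Qed.

Definition Uf r s w u : nat :=
  \sum_(S : {set 'I_n} | ((#|S| == s) && is_clique r S) && (u \in S))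
     \prod_(x in S :\ u) w x.

Lemma Pw_decomp r s w u v : u != v -> ~~ r u v ->
  exists C, forall w', (forall x, x != u -> x != v -> w' x = w x) ->
    Pw r s w' = C + w' u * Uf r s w u + w' v * Uf r s w v.
Proof.
move=> nuv nr.
exists (\sum_(S : {set 'I_n} | ((#|S| == s) && is_clique r S) && (u \notin S) && (v \notin S))
          \prod_(x in S) w x).
move=> w' hw.
rewrite /Pw (bigID (fun S => u \in S)) /=.
rewrite [X in _ + X](bigID (fun S => v \in S)) /=.
have e1 : \sum_(S : {set 'I_n} | (#|S| == s) && is_clique r S && (u \in S)) \prod_(x in S) w' x
          = w' u * Uf r s w u.
  rewrite /Uf big_distrr /=; apply: eq_bigr => S /andP[/andP[_ cl] uS].
  rewrite (big_setD1 u uS) /=; congr (_ * _); apply: eq_bigr => x.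
  rewrite !inE => /andP[xu xS]; apply: hw => //.
  by apply: contraNneq nr => <-; apply: (cliqueP _ _ cl) => //; rewrite eq_sym.
have e2 : \sum_(S : {set 'I_n} | (#|S| == s) && is_clique r S && (u \notin S) && (v \in S)) \prod_(x in S) w' x
          = w' v * Uf r s w v.
  rewrite /Uf big_distrr /=; apply: eq_big => [S|S /andP[/andP[/andP[_ cl] _] vS]].
    case vS: (v \in S); rewrite ?andbF ?andbT //.
    case uS: (u \in S); rewrite ?andbT ?andbF //=.
    case: ((#|S| == s)) => //=; apply/esym/negbTE; apply: contra nr => cl.
    by apply: (cliqueP _ _ cl).
  rewrite (big_setD1 v vS) /=; congr (_ * _); apply: eq_bigr => x.
  rewrite !inE => /andP[xv xS]; apply: hw => //.
  by apply: contraNneq nr => <-; apply: (cliqueP _ _ cl).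
have e3 : \sum_(S : {set 'I_n} | (#|S| == s) && is_clique r S && (u \notin S) && (v \notin S)) \prod_(x in S) w' x
  = \sum_(S : {set 'I_n} | (#|S| == s) && is_clique r S && (u \notin S) && (v \notin S)) \prod_(x in S) w x.
  apply: eq_bigr => S /andP[/andP[_ uS] vS]; apply: eq_bigr => x xS.
  by apply: hw; [apply: contraNneq uS => <- | apply: contraNneq vS => <-].
by rewrite e1 e2 e3 addnA addnC addnA.
Qed.

Definition mergew w u v : 'I_n -> nat :=
  fun x => if x == u then 0 else if x == v then w u + w v else w x.

Lemma mergew_off w u v x : x != u -> x != v -> mergew w u v x = w x.
Proof. by rewrite /mergew => /negbTE -> /negbTE ->. Qed.

Lemma merge_sum w u v (P : pred 'I_n) : u != v -> P u = P v ->
  \sum_(x | P x) mergew w u v x = \sum_(x | P x) w x.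
Proof.
move=> nuv Puv.
case Pu: (P u).
  have Pv : P v by rewrite -Puv.
  rewrite [LHS](bigD1 u Pu) [RHS](bigD1 u Pu) /=.
  have Pv' : P v && (v != u) by rewrite Pv eq_sym.
  rewrite (bigD1 v Pv') /= (bigD1 v Pv') /=.
  rewrite {1 2}/mergew eqxx (eq_sym v u) (negbTE nuv) eqxx add0n addnA.
  congr (_ + _); apply: eq_bigr => x /andP[/andP[_ xu] xv].
  by rewrite /mergew (negbTE xu) (negbTE xv).
apply: eq_bigr => x Px; apply: mergew_off.
  by apply: contraTneq Px => ->; rewrite Pu.
by apply: contraTneq Px => ->; rewrite -Puv Pu.
Qed.

Definition supp w := [set x | w x != 0].

Lemma phase1 r al be a b : forall w, exists w',
  [/\ \sum_x w' x = \sum_x w x,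
      (forall x y, w' x != 0 -> w' y != 0 -> x != y -> r x y) &
      al * Pw r a w + be * Pw r b w' <= al * Pw r a w' + be * Pw r b w].
Proof.
move=> w0.
suff H : forall N w, #|supp w| < N -> exists w',
  [/\ \sum_x w' x = \sum_x w x,
      (forall x y, w' x != 0 -> w' y != 0 -> x != y -> r x y) &
      al * Pw r a w + be * Pw r b w' <= al * Pw r a w' + be * Pw r b w].
  exact: (H _ w0 (ltnSn _)).
elim=> // N IH w hN.
case: (classic (exists u v, [/\ w u != 0, w v != 0, u != v & ~~ r u v])); last first.
  move=> h; exists w; split=> // x y wx wy nxy.
  case rxy: (r x y) => //; exfalso; apply: h; exists x, y; split=> //.
  by rewrite rxy.
case=> u [v [wu wv nuv nr]].
have [Ca hCa] := Pw_decomp (r:=r) a w nuv nr.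
have [Cb hCb] := Pw_decomp (r:=r) b w nuv nr.
have Pa0 := hCa w (fun _ _ _ => erefl). have Pb0 := hCb w (fun _ _ _ => erefl).
set Ua := Uf r a w u in Pa0 hCa; set Va := Uf r a w v in Pa0 hCa.
set Ub := Uf r b w u in Pb0 hCb; set Vb := Uf r b w v in Pb0 hCb.
pose w1 := mergew w u v.
pose w2 := mergew w v u.
have h1 : forall x, x != u -> x != v -> w1 x = w x by move=> x; apply: mergew_off.
have h2 : forall x, x != v -> x != u -> w2 x = w x by move=> x; apply: mergew_off.
have h2' : forall x, x != u -> x != v -> w2 x = w x by move=> x xu xv; apply: h2.
have Pa1 := hCa w1 h1. have Pb1 := hCb w1 h1.
have Pa2 := hCa w2 h2'. have Pb2 := hCb w2 h2'.
have w1u : w1 u = 0 by rewrite /w1 /mergew eqxx.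
have w1v : w1 v = w u + w v by rewrite /w1 /mergew (eq_sym v u) (negbTE nuv) eqxx.
have w2v : w2 v = 0 by rewrite /w2 /mergew eqxx.
have w2u : w2 u = w v + w u by rewrite /w2 /mergew (negbTE nuv) eqxx.
have sum1 : \sum_x w1 x = \sum_x w x by apply: merge_sum.
have sum2 : \sum_x w2 x = \sum_x w x by apply: merge_sum; rewrite // eq_sym.
have supp1 : #|supp w1| < #|supp w|.
  rewrite (cardsD1 u (supp w)) inE wu add1n ltnS; apply: subset_leq_card.
  apply/subsetP => x; rewrite !inE => wx1; apply/andP; split.
    by apply: contraNneq wx1 => ->; rewrite w1u.
  case: (eqVneq x v) => [->|xv]; first by [].
  by rewrite -h1 // ; apply: contraNneq wx1 => ->; rewrite w1u.
have supp2 : #|supp w2| < #|supp w|.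
  rewrite (cardsD1 v (supp w)) inE wv add1n ltnS; apply: subset_leq_card.
  apply/subsetP => x; rewrite !inE => wx1; apply/andP; split.
    by apply: contraNneq wx1 => ->; rewrite w2v.
  case: (eqVneq x u) => [->|xu]; first by [].
  by rewrite -h2 // ; apply: contraNneq wx1 => ->; rewrite w2v.
case: (leqP (al * Ua + be * Vb) (al * Va + be * Ub)) => hc.
  have [w' [s' cl' ineq']] := IH w1 (leq_trans supp1 (hN)).
  exists w'; split=> //; first by rewrite s' sum1.
  have step : al * Pw r a w + be * Pw r b w1 <= al * Pw r a w1 + be * Pw r b w.
    rewrite Pa0 Pb0 Pa1 Pb1 w1u w1v; nia.
  lia.
have [w' [s' cl' ineq']] := IH w2 (leq_trans supp2 (hN)).
exists w'; split=> //; first by rewrite s' sum2.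
have step : al * Pw r a w + be * Pw r b w2 <= al * Pw r a w2 + be * Pw r b w.
  rewrite Pa0 Pb0 Pa2 Pb2 w2u w2v; nia.
lia.
Qed.

End W.


Lemma sub_cons_notin (T : finType) (S : {set T}) x (l : seq T) :
  x \notin l -> ((S \subset x :: l) && (x \notin S)) = (S \subset l).
Proof.
move=> xl; apply/idP/idP.
  case/andP => /subsetP h xS; apply/subsetP => y yS.
  have := h y yS; rewrite inE => /orP[/eqP ey|//].
  by move: xS; rewrite -ey yS.
move=> /subsetP h; apply/andP; split.
  by apply/subsetP => y yS; rewrite inE (h y yS) orbT.
by apply/negP => /h; rewrite (negbTE xl).
Qed.

Lemma sum_subsets (T : finType) (w : T -> nat) (l : seq T) : uniq l -> forall s,
  \sum_(S : {set T} | (S \subset l) && (#|S| == s)) \prod_(x in S) w x = esl (map w l) s.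
Proof.
elim: l => [|x l IH] /=.
  move=> _ s.
  have e : forall S : {set T}, (S \subset [::]) = (S == set0).
    move=> S; apply/idP/idP.
      by move/subsetP => h; apply/eqP/setP => y; rewrite inE; apply/negP => /h.
    by move/eqP ->; apply/subsetP => y; rewrite inE.
  case: s => [|s].
    rewrite (eq_bigl (fun S => S == set0)) ?big_pred1_eq ?big_set0 // => S.
    by rewrite e cards_eq0 andbb.
  rewrite big_pred0 // => S; rewrite e; apply/negP => /andP[/eqP -> ].
  by rewrite cards0.
case/andP => xl ul s.
rewrite (bigID (fun S : {set T} => x \in S)) /= addnC.
congr (_ + _).
  rewrite -IH //; apply: eq_bigl => S; rewrite -andbA (andbC (#|S| == s)) andbA.
  by rewrite sub_cons_notin.
case: s => [|s].
  rewrite big_pred0 // => S; apply/negP => /andP[/andP[_ /eqP c0] xS].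
  by move: c0 => /eqP; rewrite cards_eq0 => /eqP c0; rewrite c0 inE in xS.
rewrite (reindex_onto (fun S' => x |: S') (fun S => S :\ x)) /=; last first.
  by move=> S /andP[_ xS]; rewrite setD1K.
rewrite -IH // big_distrr /=.
apply: eq_big => [S'|S' /andP[/andP[/andP[_ _] _] /eqP e]].
  case xS': (x \in S').
    have ne : ((x |: S') :\ x == S') = false.
      apply/negP => /eqP e; move: xS'; rewrite -e !inE eqxx //.
    rewrite ne andbF; apply/esym/negP => /andP[/subsetP h _].
    by move: (h x xS'); rewrite (negbTE xl).
  rewrite setU1K ?xS' // eqxx andbT setU11 andbT cardsU1 xS' add1n eqSS.
  congr (_ && _).
  rewrite -(sub_cons_notin S' xl) xS' andbT.
  apply/idP/idP.
    by move/subsetP => h; apply/subsetP => y yS; apply: h; rewrite !inE yS orbT.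
  move/subsetP => h; apply/subsetP => y; rewrite !inE => /orP[/eqP->|/h//].
  by rewrite eqxx.
have xS' : x \notin S' by rewrite -e !inE eqxx.
by rewrite big_setU1.
Qed.

Section C.
Variable n : nat.
Implicit Types (r : rel 'I_n) (w : 'I_n -> nat).

Lemma Pw_clique r s w : (forall x y, w x != 0 -> w y != 0 -> x != y -> r x y) ->
  Pw r s w = esl (map w (enum 'I_n)) s.
Proof.
move=> hc.
rewrite -sum_subsets ?enum_uniq //.
rewrite (eq_bigl (fun S : {set 'I_n} => #|S| == s)); last first.
  by move=> S /=; have -> : S \subset enum 'I_n by apply/subsetP => y; rewrite mem_enum.
rewrite [RHS](bigID (fun S : {set 'I_n} => is_clique r S)) /=.
rewrite [X in _ = _ + X]big1 ?addn0 // => S /andP[_ ncl].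
case: (boolP [exists x in S, w x == 0]).
  by case/exists_inP => x xS /eqP wx; rewrite (bigD1 x xS) /= wx.
move/exists_inPn => h; exfalso; move/negP: ncl; apply.
by apply/cliqueP => x y xS yS; apply: hc; apply: h.
Qed.

End C.


Section D.
Variable n : nat.
Implicit Types (r : rel 'I_n) (w : 'I_n -> nat).

Lemma clique_small r m w : Kfree m r ->
  (forall x y, w x != 0 -> w y != 0 -> x != y -> r x y) -> #|supp w| < m.
Proof.
move=> /forallP hK hc; rewrite ltnNge; apply/negP => hm.
pose S := [set x in take m (enum (supp w))].
have cS : #|S| = m.
  rewrite cardsE; move/card_uniqP: (take_uniq m (enum_uniq (supp w))) => ->.
  by rewrite size_takel // -cardE.
move: (hK S); rewrite cS eqxx /= => /negP; apply.
apply/cliqueP => x y; rewrite !inE => /mem_take; rewrite mem_enum inE => hx.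
by move=> /mem_take; rewrite mem_enum inE => hy; apply: hc.
Qed.

Lemma sum_enum w : sumn (map w (enum 'I_n)) = \sum_x w x.
Proof. by rewrite sumnE big_map big_enum. Qed.

Lemma sumn_filter0 (l : seq nat) : sumn [seq x <- l | x != 0] = sumn l.
Proof. by elim: l => //= x l IH; case: eqP => [->|_] /=; rewrite IH. Qed.

Lemma listify R w : #|supp w| <= R -> exists l,
  [/\ size l = R, sumn l = \sum_x w x & esl l =1 esl (map w (enum 'I_n))].
Proof.
move=> hR.
set l0 := [seq x <- map w (enum 'I_n) | x != 0].
have sz : size l0 = #|supp w|.
  rewrite size_filter count_map enumT cardE /enum_mem size_filter.
  by apply: eq_count => x; rewrite /= !inE.
exists (l0 ++ nseq (R - size l0) 0); split.
- by rewrite size_cat size_nseq sz; lia.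
- by rewrite sumn_cat sumn_nseq mul0n addn0 sumn_filter0 sum_enum.
- by move=> s; rewrite esl_nseq0 esl_filter0.
Qed.

End D.


Section E.
Variable n : nat.
Implicit Types (r : rel 'I_n) (w : 'I_n -> nat).

Definition swapf (u v x : 'I_n) : 'I_n := if x == u then v else if x == v then u else x.

Lemma swapfK u v : involutive (swapf u v).
Proof.
move=> x; rewrite /swapf.
case: (eqVneq x u) => [->|xu]; first by rewrite eqxx; case: eqP.
case: (eqVneq x v) => [->|xv]; first by rewrite eqxx.
by rewrite (negbTE xu) (negbTE xv).
Qed.

Lemma swapf_inj u v : injective (swapf u v).
Proof. exact: inv_inj (@swapfK u v). Qed.

Lemma mem_swap u v (A : {set 'I_n}) y : (y \in swapf u v @: A) = (swapf u v y \in A).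
Proof. by rewrite -{1}(swapfK u v y) (mem_imset _ _ (@swapf_inj u v)). Qed.

Lemma clique_swap r u v (S : {set 'I_n}) : (forall a b, r (swapf u v a) (swapf u v b) = r a b) ->
  is_clique r (swapf u v @: S) = is_clique r S.
Proof.
move=> hr; apply/cliqueP/cliqueP => h x y xS yS nxy.
  rewrite -hr; apply: h; rewrite ?mem_swap ?swapfK //.
  by apply: contra nxy => /eqP /swapf_inj ->.
rewrite -[x](@swapfK u v) -[y](@swapfK u v) hr; apply: h; rewrite -?mem_swap //.
by apply: contra nxy => /eqP /swapf_inj ->.
Qed.

Lemma twin r s w u v : u != v -> ~~ r u v ->
  (forall a b, r (swapf u v a) (swapf u v b) = r a b) ->
  Pw r s w = Pw r s (mergew w u v).
Proof.
move=> nuv nr hr.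
have [C hC] := Pw_decomp (r:=r) s w nuv nr.
rewrite (hC w) // (hC (mergew w u v)); last by move=> x; apply: mergew_off.
have -> : Uf r s w u = Uf r s w v.
  have hinv : involutive (fun S : {set 'I_n} => swapf u v @: S).
    by move=> S; apply/setP => y; rewrite !mem_swap swapfK.
  rewrite /Uf (reindex_inj (inv_inj hinv)).
  apply: eq_big => [S|S /andP[/andP[_ cl] vS]] /=.
    rewrite card_imset; last exact: (@swapf_inj u v).
    rewrite clique_swap // mem_swap.
    by rewrite /swapf eqxx.
  rewrite clique_swap // in cl.
  rewrite mem_swap in vS.
  have vS' : v \in S by move: vS; rewrite /swapf eqxx.
  clear vS.
  have -> : swapf u v @: S :\ u = swapf u v @: (S :\ v).
    apply/setP => y; rewrite !inE !mem_swap !inE; congr (_ && _).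
    apply/idP/idP; apply: contra => /eqP.
      by move=> e; rewrite -[y](@swapfK u v) e /swapf (eq_sym v u) (negbTE nuv) eqxx.
    by move=> ->; rewrite /swapf eqxx.
  rewrite big_imset /=; last by move=> x y _ _; apply: (@swapf_inj u v).
  apply: eq_bigr => x; rewrite !inE => /andP[xv xS].
  have xu : x != u.
    by apply: contraNneq nr => exu; apply: (cliqueP _ _ cl); rewrite -?exu.
  by rewrite /swapf (negbTE xu) (negbTE xv).
rewrite /mergew eqxx (eq_sym v u) (negbTE nuv) eqxx; lia.
Qed.

Lemma merge_all r s (rho : 'I_n -> 'I_n) : (forall x, rho (rho x) = rho x) ->
  (forall x, rho x != x -> ~~ r x (rho x) /\
     forall a b, r (swapf x (rho x) a) (swapf x (rho x) b) = r a b) ->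
  forall w, Pw r s w = Pw r s (fun y => \sum_(x | rho x == y) w x).
Proof.
move=> hrr htw w0.
suff H : forall N w, #|[set x | (rho x != x) && (w x != 0)]| < N ->
   Pw r s w = Pw r s (fun y => \sum_(x | rho x == y) w x) by apply: (H _ w0 (ltnSn _)).
elim=> // N IH w hN.
case: (boolP [exists x, (rho x != x) && (w x != 0)]).
  case/existsP => u /andP[hu wu].
  have [nr ha] := htw u hu.
  have nuv : u != rho u by rewrite eq_sym.
  rewrite (twin s w nuv nr ha) IH; last first.
    rewrite ltnS in hN; apply: (leq_trans _ hN); rewrite [X in _ <= X](cardsD1 u) inE hu wu add1n ltnS.
    apply: subset_leq_card; apply/subsetP => x; rewrite !inE => /andP[hx wx].
    have xu : x != u by apply: contraNneq wx => ->; rewrite /mergew eqxx.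
    have xv : x != rho u by apply: contraNneq hx => ->; rewrite hrr.
    by rewrite xu hx -(mergew_off w xu xv).
  apply: Pw_ext => y; apply: merge_sum => //.
  by rewrite hrr.
move/existsPn => h0.
have hz : forall x, rho x != x -> w x = 0.
  by move=> x hx; move: (h0 x); rewrite hx /= negbK => /eqP.
apply: Pw_ext => y.
case: (eqVneq (rho y) y) => hy.
  rewrite (bigD1 y) /= ?hy ?eqxx // big1 ?addn0 // => x /andP[/eqP hx xy].
  by apply: hz; rewrite hx eq_sym.
rewrite hz // big1 // => x /eqP hx; exfalso.
by move: hy; rewrite -hx hrr eqxx.
Qed.

End E.


Lemma sum_lt k t : \sum_(0 <= y < k) (y < t) = minn k t.
Proof.
elim: k => [|k IH]; first by rewrite big_geq // min0n.
rewrite big_nat_recr // IH /=; case: (ltnP k t) => h; lia.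
Qed.

Definition cntf R n y := \sum_(0 <= x < n) (x %% R == y).

Lemma cnt_formula R n y : 0 < R -> y < R -> cntf R n y = n %/ R + (y < n %% R).
Proof.
move=> R0 yR; elim: n => [|n IH].
  by rewrite /cntf big_geq // div0n mod0n.
rewrite /cntf big_nat_recr // -/(cntf R n y) IH.
have h1 := divn_eq n R. have h2 := divn_eq n.+1 R. have h3 := ltn_pmod n R0.
have h4 := ltn_pmod n.+1 R0.
case: (ltnP y (n %% R)) => a; case: (ltnP y (n.+1 %% R)) => b; case: eqP => c /=; nia.
Qed.

Lemma cnt_zero R n y : 0 < R -> (R <= y) || (n <= y) -> cntf R n y = 0.
Proof.
move=> R0 hy; rewrite /cntf big_nat_cond big1 // => x /andP[/andP[_ xn] _].
apply/eqP; rewrite eqb0; apply/eqP => e.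
have := ltn_pmod x R0; have := leq_mod x R; rewrite e; lia.
Qed.

Lemma map_zero (f : nat -> nat) s : (forall x, x \in s -> f x = 0) -> map f s = nseq (size s) 0.
Proof.
elim: s => //= x s IH h; rewrite h ?mem_head // IH // => y ys; apply: h.
by rewrite inE ys orbT.
Qed.

Lemma esl_cnt R n : 0 < R -> esl (map (cntf R n) (iota 0 n)) =1 esl (map (cntf R n) (iota 0 R)).
Proof.
move=> R0 s.
case: (leqP n R) => h.
  have e : iota 0 R = iota 0 n ++ iota n (R - n) by rewrite -{1}(subnKC h) iotaD.
  rewrite e map_cat (@map_zero _ (iota n _)) ?esl_nseq0 //.
  by move=> y; rewrite mem_iota => /andP[a _]; apply: cnt_zero => //; apply/orP; right.
have e : iota 0 n = iota 0 R ++ iota R (n - R) by rewrite -{1}(subnKC (ltnW h)) iotaD.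
rewrite e map_cat (@map_zero _ (iota R _)) ?esl_nseq0 //.
by move=> y; rewrite mem_iota => /andP[a _]; apply: cnt_zero => //; apply/orP; left.
Qed.

Lemma sumn_cnt R n : 0 < R -> sumn (map (cntf R n) (iota 0 R)) = n.
Proof.
move=> R0.
rewrite sumnE big_map.
have -> : \sum_(i <- iota 0 R) cntf R n i = \sum_(0 <= i < R) cntf R n i.
  by rewrite /index_iota subn0.
rewrite big_nat_cond (eq_bigr (fun y => n %/ R + (y < n %% R))); last first.
  by move=> y /andP[/andP[_ yR] _]; apply: cnt_formula.
rewrite -big_nat_cond big_split /= sum_nat_const_nat sum_lt subn0.
have := ltn_pmod n R0; have := divn_eq n R; lia.
Qed.

Section T.
Variable n : nat.

Definition rhoT R (x : 'I_n) : 'I_n := Ordinal (leq_ltn_trans (leq_mod x R) (ltn_ord x)).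

Lemma turan_value m s : 2 <= m -> numK s (turan m n) = esl (canon (m - 1) n) s.
Proof.
move=> m2; set R := m - 1.
have R0 : 0 < R by rewrite /R; lia.
have hres : forall x a, (val (swapf x (rhoT R x) a)) %% R = a %% R.
  move=> x a; rewrite /swapf; case: eqP => [->|_] /=; first by rewrite modn_mod.
  by case: eqP => [->|_] //=; rewrite modn_mod.
rewrite numK_Pw (@merge_all n (turan m n) s (rhoT R)); last first.
- move=> x hx; split.
    by rewrite /turan /= -/R modn_mod eqxx.
  by move=> a b; rewrite /turan -/R !hres.
- by move=> x; apply: val_inj; rewrite /= modn_mod.
set W := fun y => _.
rewrite Pw_clique; last first.
  move=> x y wx wy nxy; rewrite /turan -/R.
  have lt : forall z, W z != 0 -> z < R.
    move=> z; rewrite /W; case: (boolP [exists x, rhoT R x == z]).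
      by case/existsP => t /eqP <- _ /=; apply: ltn_pmod.
    move/existsPn => hn; rewrite big_pred0 // => t; exact: (negbTE (hn t)).
  by rewrite !modn_small ?lt.
have -> : map W (enum 'I_n) = map (cntf R n) (iota 0 n).
  rewrite -val_enum_ord -[RHS]map_comp; apply/eq_in_map => y _ /=.
  rewrite /W /cntf big_mkcond /= big_mkord.
  by apply: eq_bigr => x _; rewrite -val_eqE /=; case: eqP.
rewrite esl_cnt //; apply: balanced_eq => //.
- by rewrite size_map size_iota.
- exact: sumn_cnt.
move=> x y /mapP[x' + ->] /mapP[y' + ->]; rewrite !mem_iota /= => hx hy.
rewrite !cnt_formula //; case: (y' < n %% R); case: (x' < n %% R) => /=; lia.
Qed.

End T.


Section G.
Variable n : nat.
Implicit Types (r : rel 'I_n).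

Lemma numK_ext s r1 r2 : r1 =2 r2 -> numK s r1 = numK s r2.
Proof.
move=> h; rewrite /numK; apply: eq_card => S; rewrite !inE; congr (_ && _).
by apply/cliqueP/cliqueP => hc x y xS yS nxy; [rewrite -h | rewrite h]; apply: hc.
Qed.

Lemma sum_ones : \sum_(x : 'I_n) 1 = n.
Proof. by rewrite sum1_card card_ord. Qed.

Lemma LemmaL r m a : 2 <= m -> 2 <= a -> Kfree m r ->
  numK a r * numK 2 (turan m n) <= numK 2 r * numK a (turan m n) /\
  numK 2 r <= numK 2 (turan m n).
Proof.
move=> m2 a2 hK.
have R0 : 0 < m - 1 by lia.
rewrite !turan_value //.
set E := esl (canon (m - 1) n) 2; set N := esl (canon (m - 1) n) a.
have key : forall w, (forall x y, w x != 0 -> w y != 0 -> x != y -> r x y) ->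
    \sum_x w x = n -> exists l, [/\ size l = m - 1, sumn l = n & forall s, Pw r s w = esl l s].
  move=> w hc hs.
  have hsm := clique_small hK hc.
  have [l [l1 l2 l3]] := listify (R := m - 1) (w := w) ltac:(lia).
  by exists l; split; rewrite // ?l2 // => s; rewrite Pw_clique // l3.
split.
  have [w' [s' c' i']] := phase1 r E N a 2 (fun _ => 1).
  rewrite sum_ones in s'.
  have [l [l1 l2 l3]] := key w' c' s'.
  have [_ h2] := @P2 (m-1) n a R0 a2 l l1 l2.
  rewrite !numK_Pw; rewrite !l3 in i'; rewrite -/E -/N in h2.
  nia.
have [w' [s' c' i']] := phase1 r 1 0 2 2 (fun _ => 1).
rewrite sum_ones in s'.
have [l [l1 l2 l3]] := key w' c' s'.
have [h1 _] := @P2 (m-1) n 2 R0 (leqnn 2) l l1 l2.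
rewrite numK_Pw; move: i'; rewrite l3 !mul1n !mul0n !addn0 => i'.
exact: leq_trans i' h1.
Qed.

End G.


Section H.
Variable n : nat.
Implicit Types (r : rel 'I_n).

Lemma numK_pos2 r a : 2 <= a -> 0 < numK a r -> 0 < numK 2 r.
Proof.
move=> a2 /card_gt0P[S]; rewrite inE => /andP[/eqP cS cl].
have : 1 < #|S| by rewrite cS.
case/card_gt1P => x [y [xS yS nxy]].
apply/card_gt0P; exists [set x; y]; rewrite inE cards2 nxy eqxx /=.
apply/cliqueP => u v; rewrite !inE => hu hv nuv; apply: (cliqueP _ _ cl) => //.
  by case/orP: hu => /eqP ->.
by case/orP: hv => /eqP ->.
Qed.

Lemma clique_mono r1 r2 S : (forall x y, r1 x y -> r2 x y) -> is_clique r1 S -> is_clique r2 S.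
Proof. by move=> h /cliqueP hc; apply/cliqueP => x y xS yS nxy; apply: h; apply: hc. Qed.

Lemma col_Kfree k (c : colgraph n k) i m : Kfree m (cg_adj c) -> Kfree m (cg_col c i).
Proof.
move=> /forallP h; apply/forallP => S; apply/implyP => cS.
move: (h S); rewrite cS /=; apply: contra; apply: clique_mono => x y.
by rewrite /cg_col /cg_adj => /eqP ->.
Qed.

Lemma numK_sum s r : numK s r = \sum_(S : {set 'I_n}) ((#|S| == s) && is_clique r S).
Proof.
rewrite /numK -sum1_card big_mkcond /=; apply: eq_bigr => S _; rewrite inE.
by case: (_ && _).
Qed.

Lemma sum_edges k (c : colgraph n k) :
  \sum_(i < k) numK 2 (cg_col c i) <= numK 2 (cg_adj c).
Proof.
rewrite numK_sum (eq_bigr _ (fun i _ => numK_sum 2 (cg_col c i))) exchange_big /=.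
apply: leq_sum => S _.
case: (boolP [exists i, (#|S| == 2) && is_clique (cg_col c i) S]); last first.
  move/existsPn => h; rewrite big1 // => i _; by rewrite (negbTE (h i)).
case/existsP => i0 /andP[cS cl0].
have : 1 < #|S| by rewrite (eqP cS).
case/card_gt1P => x [y [xS yS nxy]].
have ad : (#|S| == 2) && is_clique (cg_adj c) S.
  by rewrite cS; apply: clique_mono cl0 => u v; rewrite /cg_col /cg_adj => /eqP ->.
rewrite ad (bigD1 i0) //= cS cl0 /= big1 // => j /= nj.
apply/eqP; rewrite eqb0; apply/negP => clj.
have h0 := cliqueP _ _ cl0 x y xS yS nxy. have hj := cliqueP _ _ clj x y xS yS nxy.
move: h0 hj; rewrite /cg_col => /eqP -> /eqP [] ej.
by move: nj; rewrite ej eqxx.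
Qed.

Lemma turan_Kfree m : 2 <= m -> Kfree m (turan m n).
Proof.
move=> m2; have R0 : 0 < m - 1 by lia.
apply/forallP => S; apply/implyP => /eqP cS; apply/negP => cl.
pose f (x : 'I_n) : 'I_(m - 1) := Ordinal (ltn_pmod x R0).
have inj : {in S &, injective f}.
  move=> x y xS yS /(congr1 val) /= e; apply/eqP; apply/negPn/negP => nxy.
  by move: (cliqueP _ _ cl x y xS yS nxy); rewrite /turan e eqxx.
have := max_card (f @: S); rewrite card_in_imset // card_ord cS; lia.
Qed.

End H.

Theorem mainTheorem8 (m k : nat) (a : 'I_k -> nat) :
  2 <= m -> (forall i, 2 <= a i) ->
  forall n : nat, ex_col n k a m = \max_(i < k) numK (a i) (turan m n).
Proof.
move=> m2 a2 n.
set M := \max_(i < k) numK (a i) (turan m n).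
apply/eqP; rewrite eqn_leq; apply/andP; split.
  apply/bigmax_leqP => c /andP[val hK].
  set E := numK 2 (turan m n).
  have hi : forall i, numK (a i) (cg_col c i) * E <= numK 2 (cg_col c i) * M.
    move=> i; have [h _] := LemmaL m2 (a2 i) (col_Kfree i hK).
    apply: (leq_trans h); rewrite leq_mul2l; apply/orP; right.
    exact: (leq_bigmax i).
  have hE := (LemmaL (r := cg_adj c) m2 (leqnn 2) hK).2.
  have hs := sum_edges c.
  case: (posnP E) => E0.
    rewrite big1 // => i _.
    have e0 : numK 2 (cg_col c i) = 0.
      have : \sum_(j < k) numK 2 (cg_col c j) = 0 by move: hs hE; rewrite -/E E0; lia.
      by move/eqP; rewrite sum_nat_eq0 => /forallP /(_ i) /implyP /(_ isT) /eqP.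
    apply/eqP; apply: contraT; rewrite -lt0n => /(numK_pos2 (a2 i)).
    by rewrite e0.
  rewrite -(leq_pmul2r E0) big_distrl /=.
  apply: (@leq_trans (\sum_(i < k) numK 2 (cg_col c i) * M)).
    exact: leq_sum => i _.
  rewrite -big_distrl /= mulnC leq_mul2l; apply/orP; right.
  by rewrite (leq_trans hs hE).
apply/bigmax_leqP => i _.
pose c0 : colgraph n k := [ffun p => if turan m n p.1 p.2 then Some i else None].
have adj : cg_adj c0 =2 turan m n.
  by move=> x y; rewrite /cg_adj ffunE /=; case: (turan m n x y).
have col : cg_col c0 i =2 turan m n.
  by move=> x y; rewrite /cg_col ffunE /=; case: (turan m n x y); rewrite ?eqxx.
apply: (@leq_trans (\sum_(j < k) numK (a j) (cg_col c0 j))); last first.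
  apply: (leq_bigmax_cond c0); apply/andP; split.
    apply/andP; split.
      by apply/forallP => x; rewrite ffunE /= /turan eqxx.
    by apply/forallP => x; apply/forallP => y; rewrite !ffunE /= /turan (eq_sym (y %% (m - 1))).
  have := turan_Kfree n m2; rewrite /Kfree => /forallP h; apply/forallP => S.
  move: (h S); congr (_ ==> ~~ _).
  by apply/idP/idP; apply: clique_mono => u v; rewrite adj.

rewrite (bigD1 i) //= (numK_ext _ col); exact: leq_addr.
Qed.
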